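(* Consider the system of interacting Bernoulli processes $\{(X_{t,h})_{t\geq1}: h\in\mathcal H\}$ defined in the context, with $\mathcal H$ a finite set of $N$ elements, parameters $\theta_h>0$, $c\geq\theta_h$, and interaction matrix $\Gamma=(\gamma_{j,h})_{j,h\in\mathcal H}$ satisfying: (A1) $\Gamma$ is non-negative and $\sum_{j\in\mathcal H}\gamma_{j,h}\le 1$ for each $h$; (A2) $\Gamma$ is irreducible. Let $\mathbf Y_n=(Y_{n,k})_{k\in\mathcal H}$, $n\ge1$, be random vectors such that exactly one component of $\mathbf Y_n$ equals $1$ and the others equal $0$, and assume (A3): $\mathbf Y_n$ is independent of $\mathbf X_n=(X_{n,h})_{h\in\mathcal H}$ and of all the past up to time $n-1$, with $P(Y_{n,k}=1)=\pi_k\in(0,1)$, $\sum_{k\in\mathcal H}\pi_k=1$. Set $S_{t,k,h}=\sum_{n=1}^t X_{n,h}Y_{n,k}$. Denote by $\gamma^*\in(0,1]$ the Perron–Frobenius eigenvalue of $\Gamma$ and let $S_{\infty,h}$ be the almost sure limit of $S_{t,h}/t^{\gamma^*}$ (a finite strictly positive random variable), where $S_{t,h}=\sum_{n=1}^tX_{n,h}$. Then, for each pair $h,k\in\mathcal H$, $$\frac{S_{t,k,h}}{t^{\gamma^*}}\longrightarrow \pi_kS_{\infty,h}\quad\text{almost surely},$$ and hence $S_{t,k,h}/S_{t,j,h}\to\pi_k/\pi_j$ almost surely for all $k,j,h\in\mathcal H$.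
   Context: Model: For $t\geq 0$, given the past up to time $t$, the random variables $X_{t+1,h}\in\{0,1\}$, $h\in\mathcal H$, are conditionally independent with $$P(X_{t+1,h}=1\mid \text{past up to } t)=\frac{\theta_h+\sum_{j\in\mathcal H}\gamma_{j,h}S_{t,j}}{c+t},\qquad S_{t,j}=\sum_{n=1}^t X_{n,j}.$$ Irreducibility of $\Gamma$ means the directed graph with weighted adjacency matrix $\Gamma$ is strongly connected. (In the application, $Y_{n,k}=1$ indicates that item $n$ belongs to category $k$.) *)

(* Defs.v *)
From HB Require Import structures.
From mathcomp Require Import all_boot all_order all_algebra.
From mathcomp Require Import all_classical all_reals all_analysis.
Set Implicit Arguments. Unset Strict Implicit. Unset Printing Implicit Defensive.
Import Order.TTheory GRing.Theory Num.Theory.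
Local Open Scope classical_set_scope.
Local Open Scope ring_scope.

Definition Scount {R : realType} {H : finType} (x : nat -> H -> bool) (t : nat) (j : H) : R :=
  \sum_(1 <= n < t.+1) (x n j)%:R.

Definition pmodel {R : realType} {H : finType} (theta : H -> R) (c : R)
  (gamma : H -> H -> R) (x : nat -> H -> bool) (t : nat) (h : H) : R :=
  (theta h + \sum_(j : H) gamma j h * Scount x t j) / (c + t%:R).

Definition past_event {T : Type} {H : finType} (X Y : nat -> H -> T -> bool)
  (t : nat) (xw yw : nat -> H -> bool) : set T :=
  [set w | forall m, (1 <= m <= t)%N ->
     (forall h, X m h w = xw m h) /\ (forall k, Y m k w = yw m k)].

Definition Xvec_event {T : Type} {H : finType} (X : nat -> H -> T -> bool)
  (n : nat) (x : H -> bool) : set T := [set w | forall h, X n h w = x h].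

Definition irreducible {R : realType} {H : finType} (gamma : H -> H -> R) : Prop :=
  forall j h : H, connect (fun a b => 0 < gamma a b) j h.

(* g is the Perron-Frobenius eigenvalue (= spectral radius) of Gamma:
   g >= 0 is a (real) eigenvalue of Gamma, and every complex eigenvalue
   alpha + i beta (with complex eigenvector a + i b, written in real
   coordinates) satisfies |alpha + i beta| <= g. *)
Definition PF_eigenvalue {R : realType} {H : finType} (gamma : H -> H -> R) (g : R) : Prop :=
  0 <= g /\
  (exists v : H -> R, (exists h, v h != 0) /\
     forall j, \sum_(h : H) gamma j h * v h = g * v j) /\
  (forall (alpha beta : R) (a b : H -> R),
     (exists h, (a h != 0) || (b h != 0)) ->
     (forall j, \sum_(h : H) gamma j h * a h = alpha * a j - beta * b j) ->
     (forall j, \sum_(h : H) gamma j h * b h = beta * a j + alpha * b j) ->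
     alpha ^+ 2 + beta ^+ 2 <= g ^+ 2).

(* Main.v *)
Require Import Defs.
From HB Require Import structures.
From mathcomp Require Import all_boot all_order all_algebra.
From mathcomp Require Import all_classical all_reals all_analysis.
From mathcomp Require Import ring lra zify.
Import Order.TTheory GRing.Theory Num.Theory numFieldNormedType.Exports.
Local Open Scope classical_set_scope.
Local Open Scope ring_scope.

Lemma poly2 (R : realType) (p V N : R) : 0 < p < 1 -> 0 <= N ->
 p * ((V + (1 - p))^+4 - 8 * (N+1) * (V + (1 - p))^+2) +
 (1 - p) * ((V - p)^+4 - 8 * (N+1) * (V - p)^+2) <= V^+4 - 8 * N * V^+2.
Proof.
move=> /andP[p0 p1] N0.
set s := p * (1 - p).
have s0 : 0 <= s by rewrite /s mulr_ge0 // ?subr_ge0 ltW.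
have sq : 0 <= (p + p - 1)^+2 by apply: sqr_ge0.
have s1 : 4 * s <= 1 by rewrite /s; nra.
have E : p * ((V + (1 - p))^+4 - 8 * (N+1) * (V + (1 - p))^+2) +
 (1 - p) * ((V - p)^+4 - 8 * (N+1) * (V - p)^+2) - (V^+4 - 8 * N * V^+2) =
 6 * V^+2 * s + 4 * V * s * (1 - 2 * p) + s * (1 - 3 * s) - 8 * V^+2 - 8 * (N+1) * s.
  rewrite /s; ring.
rewrite -subr_le0 E.
have h1 : 4 * V * s * (1 - 2 * p) <= 2 * V^+2 * s + 2 * s.
  have q1 : (1 - 2 * p)^+2 <= 1 by nra.
  have sq2 : 0 <= (V - (1 - 2 * p))^+2 by apply: sqr_ge0.
  have := mulr_ge0 s0 sq2.
  have q2 : 0 <= 1 - (1 - 2 * p)^+2 by rewrite subr_ge0.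
  have := mulr_ge0 s0 q2.
  nra.
nra.
Qed.

Lemma poly1 (R : realType) (p V N : R) : 0 < p < 1 ->
 p * ((V + (1 - p))^+2 - (N+1)) + (1 - p) * ((V - p)^+2 - (N+1)) <= V^+2 - N.
Proof. move=> /andP[p0 p1]; nra. Qed.

Section Main.
Context (d : measure_display) (T : measurableType d) (R : realType)
  (P : probability T R) (H : finType)
  (theta : H -> R) (c : R) (gamma : H -> H -> R) (pi : H -> R)
  (X Y : nat -> H -> T -> bool).
Hypothesis theta_gt0 : forall h, 0 < theta h.
Hypothesis theta_le : forall h, theta h <= c.
Hypothesis gamma_ge0 : forall j h, 0 <= gamma j h.
Hypothesis gamma_sum : forall h, \sum_(j : H) gamma j h <= 1.
Hypothesis hXm : forall n h, (0 < n)%N -> measurable [set w | X n h w].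
Hypothesis hYm : forall n k, (0 < n)%N -> measurable [set w | Y n k w].
Hypothesis hdyn : forall (t : nat) (xw yw : nat -> H -> bool) (x : H -> bool),
     P (past_event X Y t xw yw `&` Xvec_event X t.+1 x)
     = (P (past_event X Y t xw yw) *
        (\prod_(h : H) (if x h then pmodel theta c gamma xw t h
                        else 1 - pmodel theta c gamma xw t h))%:E)%E.
Hypothesis hone : forall n, (0 < n)%N -> forall w, exists! k, Y n k w.
Hypothesis pi01 : forall k, 0 < pi k < 1.
Hypothesis pi_sum : \sum_(k : H) pi k = 1.
Hypothesis hA3 : forall (n : nat) (xw yw : nat -> H -> bool) (x : H -> bool) (k : H),
     (0 < n)%N ->
     P (past_event X Y n.-1 xw yw `&` Xvec_event X n x `&` [set w | Y n k w])
     = (P (past_event X Y n.-1 xw yw `&` Xvec_event X n x) * (pi k)%:E)%E.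

Definition upd (f : nat -> H -> bool) (n : nat) (v : H -> bool) : nat -> H -> bool :=
  fun m => if m == n then v else f m.
Definition onehot (k : H) : H -> bool := fun k' => k' == k.
Definition rho (xw : nat -> H -> bool) (i : nat) (x : {ffun H -> bool}) : R :=
  \prod_(h : H) (if x h then pmodel theta c gamma xw i h
                 else 1 - pmodel theta c gamma xw i h).

Fixpoint Ev (r i : nat) (xw yw : nat -> H -> bool)
  (F : (nat -> H -> bool) -> (nat -> H -> bool) -> R) : R :=
  match r with
  | 0 => F xw yw
  | r'.+1 => \sum_(x : {ffun H -> bool}) \sum_(k : H)
       rho xw i x * pi k * Ev r' i.+1 (upd xw i.+1 x) (upd yw i.+1 (onehot k)) F
  end.



Lemma Scount_ge0 (xw : nat -> H -> bool) t j : 0 <= Scount xw t j :> R.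
Proof. by rewrite /Scount sumr_ge0 // => n _; rewrite ler0n. Qed.

Lemma Scount_le (xw : nat -> H -> bool) t j : Scount xw t j <= t%:R :> R.
Proof.
rewrite /Scount; apply: le_trans (_ : \sum_(1 <= n < t.+1) (1:R) <= _).
  by apply: ler_sum => n _; case: (xw n j).
by rewrite sumr_const_nat subn1 /=.
Qed.

Lemma pmodel_ge xw t h :
  theta h / (c + t%:R) <= pmodel theta c gamma xw t h.
Proof.
have cpos : 0 < c + t%:R.
  by apply: ltr_wpDr; [exact: ler0n| exact: lt_le_trans (theta_gt0 h) (theta_le h)].
rewrite /pmodel ler_pM2r ?invr_gt0 // lerDl sumr_ge0 // => j _.
by rewrite mulr_ge0 // Scount_ge0.
Qed.

Lemma pmodel01 xw t h :
  0 <= pmodel theta c gamma xw t h <= 1.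
Proof.
have cpos : 0 < c + t%:R.
  by apply: ltr_wpDr; [exact: ler0n| exact: lt_le_trans (theta_gt0 h) (theta_le h)].
apply/andP; split.
  apply: le_trans (pmodel_ge xw t h).
  by rewrite divr_ge0 // ltW.
rewrite /pmodel ler_pdivrMr // mul1r lerD //.
apply: le_trans (_ : \sum_j gamma j h * t%:R <= _).
  by apply: ler_sum => j _; rewrite ler_wpM2l // Scount_le.
by rewrite -mulr_suml ler_piMl.
Qed.

Lemma rho_ge0 xw i x : 0 <= rho xw i x.
Proof.
rewrite /rho prodr_ge0 // => h _; have /andP[p0 p1] := pmodel01 xw i h.
by case: (x h) => //; rewrite subr_ge0.
Qed.

Lemma sum_rho_f xw i h (f : bool -> R) :
  \sum_(x : {ffun H -> bool}) rho xw i x * f (x h) =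
  pmodel theta c gamma xw i h * f true + (1 - pmodel theta c gamma xw i h) * f false.
Proof.
set p := pmodel theta c gamma xw i.
pose g (h' : H) (b : bool) : R :=
  (if b then p h' else 1 - p h') * (if h' == h then f b else 1).
have E : forall x : {ffun H -> bool}, rho xw i x * f (x h) = \prod_h' g h' (x h').
  move=> x; rewrite /rho /g big_split /=; congr (_ * _).
  rewrite (bigD1 h) //= eqxx [X in _ = _ * X]big1 ?mulr1 //.
  by move=> h' /negbTE ->.
under eq_bigr do rewrite E.
rewrite -(bigA_distr_bigA g).
rewrite [LHS](bigD1 h) //=.
rewrite [X in _ * X]big1 ?mulr1.
  by rewrite big_bool /g eqxx addrC.
move=> h' /negbTE hh; rewrite big_bool /g hh !mulr1.
by rewrite /= addrC subrK.
Qed.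

Lemma sum_rho xw i : \sum_(x : {ffun H -> bool}) rho xw i x = 1.
Proof.
have [h|H0] := pickP (fun _ : H => true).
  have := sum_rho_f xw i h (fun _ => 1).
  by under eq_bigr do rewrite mulr1; move=> ->; rewrite !mulr1 addrC subrK.
rewrite /rho.
have -> : \sum_(x : {ffun H -> bool}) \prod_h0 (if x h0 then pmodel theta c gamma xw i h0
    else 1 - pmodel theta c gamma xw i h0) = \sum_(x : {ffun H -> bool}) 1.
  by apply: eq_bigr => x _; rewrite big_pred0.
rewrite sumr_const card_ffun.
have -> : #|H| = 0%N by apply: eq_card0 => x; have := H0 x.
by [].
Qed.

Lemma sum_pi_f k0 (f : bool -> R) :
  \sum_(k : H) pi k * f (k == k0) = pi k0 * f true + (1 - pi k0) * f false.
Proof.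
rewrite (bigD1 k0) //= eqxx; congr (_ + _).
rewrite (eq_bigr (fun k => pi k * f false)); last by move=> k /negbTE ->.
rewrite -mulr_suml; congr (_ * _).
by rewrite -pi_sum [X in _ = X - _](bigD1 k0) //= addrC addrK.
Qed.

Lemma sum_rho_pi xw i (G : {ffun H -> bool} -> H -> R) :
  \sum_x \sum_k rho xw i x * pi k * G x k = \sum_x rho xw i x * \sum_k pi k * G x k.
Proof.
by apply: eq_bigr => x _; rewrite mulr_sumr; apply: eq_bigr => k _; rewrite mulrA (mulrC (rho _ _ _)).
Qed.

Lemma pi_ge0 k : 0 <= pi k.
Proof. by have /andP[/ltW] := pi01 k. Qed.

Lemma Ev_le r : forall i xw yw F G, (forall a b, F a b <= G a b) ->
  Ev r i xw yw F <= Ev r i xw yw G.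
Proof.
elim: r => [|r IH] i xw yw F G FG //=.
apply: ler_sum => x _; apply: ler_sum => k _.
by apply: ler_wpM2l; [rewrite mulr_ge0 ?rho_ge0 ?pi_ge0| exact: IH].
Qed.

Lemma Ev_lin r : forall i xw yw F G (al be : R),
  Ev r i xw yw (fun a b => al * F a b + be * G a b) =
  al * Ev r i xw yw F + be * Ev r i xw yw G.
Proof.
elim: r => [|r IH] i xw yw F G al be //=.
rewrite !mulr_sumr -big_split /=; apply: eq_bigr => x _.
rewrite !mulr_sumr -big_split /=; apply: eq_bigr => k _.
by rewrite IH; ring.
Qed.

Lemma Ev_const r : forall i xw yw (al : R), Ev r i xw yw (fun _ _ => al) = al.
Proof.
elim: r => [|r IH] i xw yw al //=.
under eq_bigr do under eq_bigr do rewrite IH.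
rewrite sum_rho_pi.
under eq_bigr do rewrite -mulr_suml pi_sum mul1r.
by rewrite -mulr_suml sum_rho mul1r.
Qed.

Lemma Ev_super (Phi : nat -> (nat -> H -> bool) -> (nat -> H -> bool) -> R) :
  (forall j xw yw, \sum_x \sum_k rho xw j x * pi k *
       Phi j.+1 (upd xw j.+1 x) (upd yw j.+1 (onehot k)) <= Phi j xw yw) ->
  forall r i xw yw, Ev r i xw yw (Phi (i + r)%N) <= Phi i xw yw.
Proof.
move=> step; elim=> [|r IH] i xw yw /=; first by rewrite addn0.
apply: le_trans (step i xw yw).
apply: ler_sum => x _; apply: ler_sum => k _.
apply: ler_wpM2l; first by rewrite mulr_ge0 ?rho_ge0 ?pi_ge0.
by rewrite addnS -addSn; apply: IH.
Qed.

Lemma bmeas (Z : nat -> H -> T -> bool) n h b :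
  (forall n h, (0 < n)%N -> measurable [set w | Z n h w]) -> (0 < n)%N ->
  measurable [set w | Z n h w = b].
Proof.
move=> Zm n0; case: b.
  have -> : [set w | Z n h w = true] = [set w | Z n h w] by apply/seteqP; split.
  exact: Zm.
have -> : [set w | Z n h w = false] = ~` [set w | Z n h w].
  by apply/seteqP; split => w /=; [move=> ->|move/negP/negbTE].
exact/measurableC/Zm.
Qed.

Lemma vmeas (Z : nat -> H -> T -> bool) n (b : H -> bool) :
  (forall n h, (0 < n)%N -> measurable [set w | Z n h w]) -> (0 < n)%N ->
  measurable [set w | forall h, Z n h w = b h].
Proof.
move=> Zm n0.
rewrite (_ : [set w | forall h, Z n h w = b h] = \bigcap_(h in [set: H]) [set w | Z n h w = b h]).
  by apply: fin_bigcap_measurable; [exact: finite_finset| move=> h _; exact: bmeas].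
apply/seteqP; split => w /= Hw; first by move=> h _; exact: Hw.
by move=> h; exact: Hw.
Qed.

Lemma past0 xw yw : past_event X Y 0 xw yw = setT.
Proof. by apply/seteqP; split => w // _ m /andP[/leq_trans h /h]. Qed.

Lemma pastS i xw yw : past_event X Y i.+1 xw yw = past_event X Y i xw yw `&`
  ([set w | forall h, X i.+1 h w = xw i.+1 h] `&` [set w | forall k, Y i.+1 k w = yw i.+1 k]).
Proof.
apply/seteqP; split => w.
  move=> Hw; split; last by have [] := Hw i.+1 (leqnn _) => //; rewrite ltnS leqnn.
  by move=> m /andP[m1 mi]; apply: Hw; rewrite m1 ltnW.
move=> [Hw [H1 H2]] m /andP[m1]; rewrite leq_eqVlt ltnS => /orP[/eqP ->|mi].
  by split.
by apply: Hw; rewrite m1.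
Qed.

Lemma past_meas i xw yw : measurable (past_event X Y i xw yw).
Proof.
elim: i => [|i IH]; first by rewrite past0.
by rewrite pastS; apply: measurableI => //; apply: measurableI; apply: vmeas.
Qed.

Lemma past_ext i xw yw xw' yw' :
  (forall m h, (1 <= m <= i)%N -> xw m h = xw' m h /\ yw m h = yw' m h) ->
  past_event X Y i xw yw = past_event X Y i xw' yw'.
Proof.
move=> E; apply/seteqP; split => w Hw m mi; have [E1 E2] := Hw m mi;
  split => h; have [E3 E4] := E m h mi.
- by rewrite -E3.
- by rewrite -E4.
- by rewrite E3.
- by rewrite E4.
Qed.

Lemma past_upd i xw yw (x : H -> bool) (y : H -> bool) :
  past_event X Y i (upd xw i.+1 x) (upd yw i.+1 y) = past_event X Y i xw yw.
Proof.
apply: past_ext => m h /andP[_ mi].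
by rewrite /upd (_ : (m == i.+1) = false) //; apply/negbTE; rewrite neq_ltn ltnS mi.
Qed.

Lemma onehot_eq n k w : (0 < n)%N -> Y n k w -> forall k', Y n k' w = onehot k k'.
Proof.
move=> n0 Yk k'; have [k0 [_ U]] := @hone n n0 w.
rewrite /onehot; case: eqP => [->//|nk]; apply/negP => Yk'.
by apply: nk; rewrite -(U k' Yk') (U k Yk).
Qed.

Lemma past_upd_eq i xw yw (x : {ffun H -> bool}) k :
  past_event X Y i.+1 (upd xw i.+1 x) (upd yw i.+1 (onehot k)) =
  past_event X Y i xw yw `&` Xvec_event X i.+1 x `&` [set w | Y i.+1 k w].
Proof.
rewrite pastS past_upd /upd eqxx.
apply/seteqP; split => w.
  move=> [P1 [P2 P3]]; split; [split=> //|].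
  by rewrite /= P3 /onehot eqxx.
move=> [[P1 P2] P3]; split=> //; split=> //.
exact: onehot_eq.
Qed.

Lemma prob_upd i xw yw (x : {ffun H -> bool}) k :
  P (past_event X Y i.+1 (upd xw i.+1 x) (upd yw i.+1 (onehot k))) =
  (P (past_event X Y i xw yw) * (rho xw i x * pi k)%:E)%E.
Proof.
rewrite past_upd_eq.
have := @hA3 i.+1 xw yw (fun h => x h) k (ltn0Sn i); rewrite /= => ->.
rewrite (hdyn i xw yw (fun h => x h)) -muleA EFinM.
by [].
Qed.


Lemma P_fin_bigcup (I : finType) (F : I -> set T) :
  (forall i, measurable (F i)) -> trivIset setT F ->
  P (\bigcup_(i in [set: I]) F i) = (\sum_(i : I) P (F i))%E.
Proof.
move=> Fm Ft; rewrite measure_fin_bigcup //; last exact: finite_finset.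
rewrite (fsbigE (enum I)) ?enum_uniq //; last by move=> i _; rewrite mem_enum.
rewrite -big_filter.
have -> : [seq i <- enum I | i \in [set: I]] = enum I.
  by apply/all_filterP/allP => i _; rewrite in_setE.
by rewrite big_enum.
Qed.

Definition Qset (F : (nat -> H -> bool) -> (nat -> H -> bool) -> bool) : set T :=
  [set w | F (fun n h => X n h w) (fun n k => Y n k w)].
Definition dep n (F : (nat -> H -> bool) -> (nat -> H -> bool) -> bool) :=
  forall a a' b b', (forall m h, (1 <= m <= n)%N -> a m h = a' m h /\ b m h = b' m h) ->
  F a b = F a' b'.

Definition piece i xw yw (p : {ffun H -> bool} * H) :=
  past_event X Y i.+1 (upd xw i.+1 p.1) (upd yw i.+1 (onehot p.2)).

Lemma past_decomp i xw yw :
  past_event X Y i xw yw = \bigcup_(p in [set: {ffun H -> bool} * H]) piece i xw yw p.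
Proof.
apply/seteqP; split => w.
  move=> Hw; have [k [Yk _]] := @hone i.+1 (ltn0Sn i) w.
  exists ([ffun h => X i.+1 h w], k) => //.
  by rewrite /piece past_upd_eq; split; [split=> // h /=; rewrite ffunE|].
by move=> [p _]; rewrite /piece past_upd_eq => -[[]].
Qed.

Lemma piece_triv i xw yw : trivIset setT (piece i xw yw).
Proof.
move=> [x k] [x' k'] _ _ [w []]; rewrite /piece !past_upd_eq /= => -[[_ E1] Y1] [[_ E2] Y2].
have -> : x = x' by apply/ffunP => h; rewrite -E1 -E2.
have [k0 [_ U]] := @hone i.+1 (ltn0Sn i) w.
by rewrite -(U k Y1) (U k' Y2).
Qed.

Lemma key r : forall i xw yw F, dep (i + r) F ->
  measurable (past_event X Y i xw yw `&` Qset F) /\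
  P (past_event X Y i xw yw `&` Qset F) =
  (P (past_event X Y i xw yw) * (Ev r i xw yw (fun a b => (F a b)%:R))%:E)%E.
Proof.
elim: r => [|r IH] i xw yw F dF.
  have E : past_event X Y i xw yw `&` Qset F =
           if F xw yw then past_event X Y i xw yw else set0.
    apply/seteqP; split => w.
      move=> [Hw Fw]; rewrite /Qset /= in Fw.
      rewrite -(dF (fun n h => X n h w) xw (fun n k => Y n k w) yw) ?Fw // => m h; rewrite addn0 => mi.
      by have [E1 E2] := Hw m mi; rewrite E1 E2.
    case: ifP => // Fx Hw; split => //; rewrite /Qset /= (dF (fun n h => X n h w) xw (fun n k => Y n k w) yw) // => m h.
    by rewrite addn0 => mi; have [E1 E2] := Hw m mi; rewrite E1 E2.
  rewrite E /=; split; first by case: ifP => _ //; exact: past_meas.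
  by case: ifP => _; rewrite ?mule1 ?measure0 ?mule0.
have E : past_event X Y i xw yw `&` Qset F =
  \bigcup_(p in [set: {ffun H -> bool} * H]) (piece i xw yw p `&` Qset F).
  by rewrite {1}past_decomp setI_bigcupl.
have dF' : dep (i.+1 + r) F by rewrite addSnnS.
have IHp := fun p : {ffun H -> bool} * H => IH i.+1 (upd xw i.+1 p.1) (upd yw i.+1 (onehot p.2)) F dF'.
have mp : forall p, measurable (piece i xw yw p `&` Qset F) by move=> p; case: (IHp p).
rewrite E; split.
  by apply: fin_bigcup_measurable => //; exact: finite_finset.
rewrite P_fin_bigcup //; last first.
  move=> p q _ _ [w [[A1 _] [A2 _]]]; apply: (@piece_triv i xw yw) => //.
  by exists w.
under eq_bigr => p _ do rewrite (proj2 (IHp p)) /piece prob_upd.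
have fP : P (past_event X Y i xw yw) \is a fin_num.
  by rewrite ge0_fin_numE ?measure_ge0 // (le_lt_trans (probability_le1 P (past_meas i xw yw))) ?ltry.
rewrite -(fineK fP).
under eq_bigr do rewrite -!EFinM.
rewrite sumEFin -EFinM /= mulr_sumr; congr (_%:E).
rewrite (eq_bigr (fun x => \sum_k fine (P (past_event X Y i xw yw)) * (rho xw i x * pi k *
         Ev r i.+1 (upd xw i.+1 x) (upd yw i.+1 (onehot k))
           (fun a b : nat -> H -> bool => (F a b)%:R)))); last by move=> x _; rewrite mulr_sumr.
rewrite pair_bigA /=.
apply: eq_bigr => -[x k] _ /=; ring.
Qed.

Lemma key0 t F : dep t F ->
  measurable (Qset F) /\
  P (Qset F) = (Ev t 0 (fun _ _ => false) (fun _ _ => false) (fun a b => (F a b)%:R))%:E.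
Proof.
move=> dF; have := key t 0 (fun _ _ => false) (fun _ _ => false) F.
rewrite add0n past0 setTI probability_setT mul1e; exact.
Qed.

Lemma Ev_ext r i xw yw F G : (forall a b, F a b = G a b) ->
  Ev r i xw yw F = Ev r i xw yw G.
Proof.
move=> FG; apply/eqP; rewrite eq_le !Ev_le // => a b; rewrite FG //.
Qed.

Lemma Ev_scale r i xw yw F (al : R) :
  Ev r i xw yw (fun a b => al * F a b) = al * Ev r i xw yw F.
Proof.
rewrite (@Ev_ext _ _ _ _ _ (fun a b => al * F a b + 0 * F a b)); last by move=> a b; ring.
by rewrite Ev_lin // mul0r addr0.
Qed.

Lemma Ev_ge0 r i xw yw F : (forall a b, 0 <= F a b) -> 0 <= Ev r i xw yw F.
Proof.
move=> F0; rewrite -(Ev_const r i xw yw 0).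
exact: Ev_le.
Qed.

Lemma upd_lt (a : nat -> H -> bool) j v i : (i <= j)%N -> upd a j.+1 v i = a i.
Proof. by move=> ij; rewrite /upd (_ : (i == j.+1) = false) //; apply/negbTE; rewrite neq_ltn ltnS ij. Qed.

Lemma upd_eq (a : nat -> H -> bool) j v : upd a j.+1 v j.+1 = v.
Proof. by rewrite /upd eqxx. Qed.

Lemma sum_upd (g : (nat -> H -> bool) -> (nat -> H -> bool) -> nat -> R) a b j x y :
  (forall i, (i <= j)%N -> g (upd a j.+1 x) (upd b j.+1 y) i = g a b i) ->
  \sum_(1 <= i < j.+2) g (upd a j.+1 x) (upd b j.+1 y) i =
  \sum_(1 <= i < j.+1) g a b i + g (upd a j.+1 x) (upd b j.+1 y) j.+1.
Proof.
move=> E; rewrite big_nat_recr //=; congr (_ + _).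
by apply: eq_big_nat => i /andP[_ ij]; apply: E.
Qed.

Section MartH.
Variable h : H.

Definition NS (m' j : nat) (a : nat -> H -> bool) : bool :=
  all (fun n => (m' < n)%N ==> ~~ a n h) (iota 0 j.+1).

Definition PhiA (m' j : nat) (a b : nat -> H -> bool) : R :=
  (NS m' j a)%:R * (1 + \sum_(m' <= n < j) theta h / (c + n%:R)).

Lemma NS_upd m' j a (x : H -> bool) :
  NS m' j.+1 (upd a j.+1 x) = NS m' j a && ((m' < j.+1)%N ==> ~~ x h).
Proof.
rewrite /NS -[j.+2]addn1 iotaD all_cat /= add0n andbT upd_eq; congr (_ && _).
apply: eq_in_all => n; rewrite mem_iota => /andP[_ nj]; rewrite upd_lt //; by rewrite add1n ltnS in nj.
Qed.

Lemma PhiA_step m' j a b :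
  \sum_x \sum_k rho a j x * pi k *
       PhiA m' j.+1 (upd a j.+1 x) (upd b j.+1 (onehot k)) <= PhiA m' j a b.
Proof.
rewrite sum_rho_pi.
under eq_bigr do rewrite -mulr_suml pi_sum mul1r.
rewrite /PhiA.
under eq_bigr do rewrite NS_upd.
set S := \sum_(m' <= n < j) theta h / (c + n%:R).
have S0 : 0 <= S.
  rewrite /S sumr_ge0 // => n _; apply: divr_ge0; first exact: ltW.
  by apply: addr_ge0 => //; exact: (le_trans (ltW (theta_gt0 h)) (theta_le h)).
have cpos : 0 < c + j%:R.
  by rewrite ltr_wpDr ?ler0n // (lt_le_trans (theta_gt0 h) (theta_le h)).
have p01 := pmodel01 a j h.
have pge := pmodel_ge a j h.
set p := pmodel theta c gamma a j h in p01 pge *.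
case: (leqP m' j) => mj.
  rewrite big_nat_recr //= -/S.
  have -> := sum_rho_f a j h
    (fun b => (NS m' j a && ((m' < j.+1)%N ==> ~~ b))%:R * (1 + (S + theta h / (c + j%:R)))).
  rewrite /= ltnS mj /= andbF mul0r mulr0 add0r.
  case: (NS m' j a); rewrite ?mul0r ?mulr0 // !mul1r.
  set q := theta h / (c + j%:R) in pge *.
  have q0 : 0 <= q by rewrite /q divr_ge0 ?ltW.
  move: p01 => /andP[p0 p1]; rewrite -/p.
  have pq : 0 <= p - q by rewrite subr_ge0.
  have := mulr_ge0 pq (addr_ge0 (addr_ge0 ler01 S0) q0).
  have := mulr_ge0 q0 (addr_ge0 S0 q0); nra.
rewrite [\sum_(m' <= n < j.+1) _]big_geq // /S big_geq ?(ltnW mj) //.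
have -> := sum_rho_f a j h
    (fun b => (NS m' j a && ((m' < j.+1)%N ==> ~~ b))%:R * (1 + 0)).
by rewrite /= ltnNge mj /= andbT; lra.
Qed.

Lemma NS_bound m' M :
  Ev M 0 (fun _ _ => false) (fun _ _ => false) (fun a b => (NS m' M a)%:R) *
    (1 + \sum_(m' <= n < M) theta h / (c + n%:R)) <= 1.
Proof.
have := Ev_super (PhiA m') (PhiA_step m') M 0 (fun _ _ => false) (fun _ _ => false).
move=> E; rewrite add0n in E.
have E0 : PhiA m' 0 (fun _ _ => false) (fun _ _ => false) = 1.
  by rewrite /PhiA big_geq // /NS /= addr0 mulr1.
rewrite E0 /PhiA in E.
rewrite mulrC -Ev_scale; apply: le_trans E; rewrite le_eqVlt; apply/orP; left; apply/eqP.
by apply: Ev_ext => a b; rewrite mulrC.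
Qed.

Variables (k0 : H) (m : nat).

Definition Sn (a : nat -> H -> bool) (n : nat) : nat := \sum_(1 <= i < n.+1) a i h.
Definition al (a : nat -> H -> bool) (i : nat) : bool := a i h && (Sn a i <= m)%N.
Definition Nn (a : nat -> H -> bool) (n : nat) : nat := \sum_(1 <= i < n.+1) al a i.
Definition Vr (a b : nat -> H -> bool) (n : nat) : R :=
  \sum_(1 <= i < n.+1) (al a i)%:R * ((b i k0)%:R - pi k0).

Lemma Sn_upd a j x i : (i <= j)%N -> Sn (upd a j.+1 x) i = Sn a i.
Proof.
move=> ij; apply: eq_big_nat => n /andP[_]; rewrite ltnS => ni.
by rewrite upd_lt // (leq_trans ni).
Qed.

Lemma Sn_S a j : Sn a j.+1 = (Sn a j + a j.+1 h)%N.
Proof. by rewrite /Sn big_nat_recr. Qed.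

Lemma al_upd a j x i : (i <= j)%N -> al (upd a j.+1 x) i = al a i.
Proof. by move=> ij; rewrite /al Sn_upd // upd_lt. Qed.

Lemma al_updS a j (x : H -> bool) : al (upd a j.+1 x) j.+1 = x h && (Sn a j < m)%N.
Proof.
rewrite /al Sn_S Sn_upd // upd_eq.
by case: (x h); rewrite ?addn1 ?addn0.
Qed.

Lemma Vr_upd a b j (x : H -> bool) k :
  Vr (upd a j.+1 x) (upd b j.+1 (onehot k)) j.+1 =
  Vr a b j + (x h && (Sn a j < m)%N)%:R * ((k0 == k)%:R - pi k0).
Proof.
rewrite /Vr.
have := @sum_upd (fun a b i => (al a i)%:R * ((b i k0)%:R - pi k0)) a b j x (onehot k).
move=> ->; last by move=> i ij /=; rewrite al_upd // upd_lt.
by rewrite al_updS upd_eq.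
Qed.

Lemma Nn_upd a j (x : H -> bool) :
  (Nn (upd a j.+1 x) j.+1 = Nn a j + (x h && (Sn a j < m)%N))%N.
Proof.
rewrite /Nn big_nat_recr //= al_updS; congr (_ + _)%N.
by apply: eq_big_nat => i /andP[_ ij]; rewrite al_upd.
Qed.

Lemma Nn_min a n : Nn a n = minn (Sn a n) m.
Proof.
elim: n => [|n IH]; first by rewrite /Nn /Sn big_geq // big_geq // min0n.
rewrite /Nn big_nat_recr //= -/(Nn a n) IH Sn_S /al Sn_S.
case: (a n.+1 h) => /=; lia.
Qed.

Lemma Nn_le a n : (Nn a n <= m)%N.
Proof. by rewrite Nn_min geq_minr. Qed.

Definition Phi1 (j : nat) (a b : nat -> H -> bool) : R := Vr a b j ^+ 2 - (Nn a j)%:R.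
Definition Phi2 (j : nat) (a b : nat -> H -> bool) : R :=
  Vr a b j ^+ 4 - 8 * (Nn a j)%:R * Vr a b j ^+ 2.

Lemma step_gen (Phi : R -> R -> R) (j : nat) a b :
  (forall V N, 0 <= N -> pi k0 * Phi (V + (1 - pi k0)) (N + 1) +
        (1 - pi k0) * Phi (V - pi k0) (N + 1) <= Phi V N) ->
  \sum_x \sum_k rho a j x * pi k *
     Phi (Vr (upd a j.+1 x) (upd b j.+1 (onehot k)) j.+1) (Nn (upd a j.+1 x) j.+1)%:R
  <= Phi (Vr a b j) (Nn a j)%:R.
Proof.
move=> hP; rewrite sum_rho_pi.
apply: le_trans (_ : \sum_x rho a j x * Phi (Vr a b j) (Nn a j)%:R <= _); last first.
  by rewrite -mulr_suml sum_rho mul1r.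
apply: ler_sum => x _; apply: ler_wpM2l; first exact: rho_ge0.
under eq_bigr do rewrite Vr_upd Nn_upd eq_sym.
have -> := sum_pi_f k0
  (fun bb => Phi (Vr a b j + (x h && (Sn a j < m)%N)%:R * (bb%:R - pi k0))
      (Nn a j + (x h && (Sn a j < m)%N))%N%:R).
case: (x h && (Sn a j < m)%N) => /=.
  rewrite natrD; apply: le_trans (hP _ _ (ler0n _ _)); rewrite !mul1r sub0r.
  by rewrite -(addrC (-pi k0)).
by rewrite !mul0r !addr0 addn0 -mulrDl addrC subrK mul1r.
Qed.

Lemma V4_bound t :
  Ev t 0 (fun _ _ => false) (fun _ _ => false) (fun a b => Vr a b t ^+ 4) <= 8 * (m%:R)^+2.
Proof.
set a0 := (fun _ _ => false) : nat -> H -> bool.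
have E2 := Ev_super Phi2 (fun j a b => step_gen (fun V N => V^+4 - 8 * N * V^+2) j a b
   (fun V N N0 => @poly2 _ _ V N (pi01 k0) N0)) t 0 a0 a0.
have E1 := Ev_super Phi1 (fun j a b => step_gen (fun V N => V^+2 - N) j a b
   (fun V N N0 => @poly1 _ _ V N (pi01 k0))) t 0 a0 a0.
rewrite add0n /Phi2 /Phi1 /Vr /Nn !big_geq // in E1 E2.
rewrite /= in E1 E2.
have eq2 : Ev t 0 a0 a0 (Phi2 t) = Ev t 0 a0 a0 (fun a b => 1 * (Vr a b t ^+ 4) + (- 8) * ((Nn a t)%:R * Vr a b t ^+ 2)).
  by apply: Ev_ext => a b; rewrite /Phi2; ring.
have eq1 : Ev t 0 a0 a0 (Phi1 t) = Ev t 0 a0 a0 (fun a b => 1 * (Vr a b t ^+ 2) + (- 1) * ((Nn a t)%:R)).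
  by apply: Ev_ext => a b; rewrite /Phi1; ring.
rewrite eq2 in E2; rewrite eq1 in E1.
rewrite !Ev_lin // in E1 E2.
have B1 : Ev t 0 a0 a0 (fun a b => (Nn a t)%:R * Vr a b t ^+ 2) <=
          m%:R * Ev t 0 a0 a0 (fun a b => Vr a b t ^+ 2).
  rewrite -Ev_scale; apply: Ev_le => a b; apply: ler_wpM2r; first exact: sqr_ge0.
  by rewrite ler_nat Nn_le.
have B2 : Ev t 0 a0 a0 (fun a b => (Nn a t)%:R) <= m%:R.
  rewrite -(Ev_const t 0 a0 a0 m%:R).
  by apply: Ev_le => a b; rewrite ler_nat Nn_le.
have m0 : 0 <= m%:R :> R by [].
nra.
Qed.

End MartH.

Lemma c_gt0 (h : H) : 0 < c.
Proof. exact: lt_le_trans (theta_gt0 h) (theta_le h). Qed.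

Lemma harm_unb (B : R) : exists M, B < \sum_(0 <= n < M) (n.+1%:R)^-1.
Proof.
apply: contrapT => /forallNP Hn; apply: (@dvg_harmonic R).
apply: nondecreasing_is_cvgn.
  by apply: nondecreasing_series => n _ _; exact: harmonic_ge0.
exists B => _ [M _ <-]; rewrite leNgt; apply/negP => HB.
by apply: (Hn M); rewrite /series /=.
Qed.

Lemma sum_q_unb h m' (B : R) : exists M, B < \sum_(m' <= n < M) theta h / (c + n%:R).
Proof.
have c0 := c_gt0 h.
set K := theta h / (c + 1).
have K0 : 0 < K by rewrite divr_gt0 ?theta_gt0 // addr_gt0.
set A := \sum_(0 <= n < m') (n.+1%:R : R)^-1.
have [M HM] := harm_unb (`|B| / K + A).
have BK : 0 <= `|B| / K by rewrite divr_ge0 // ltW.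
have mM : (m' <= M)%N.
  rewrite leqNgt; apply/negP => Mm; move: HM; apply/negP; rewrite -leNgt.
  have SA : A = \sum_(0 <= n < M) (n.+1%:R : R)^-1 + \sum_(M <= n < m') (n.+1%:R : R)^-1.
    by rewrite /A -big_cat_nat // ltnW.
  have : 0 <= \sum_(M <= i < m') (i.+1%:R : R)^-1 by rewrite sumr_ge0.
  lra.
exists M.
have E : \sum_(m' <= n < M) (n.+1%:R : R)^-1 = \sum_(0 <= n < M) (n.+1%:R : R)^-1 - A.
  by rewrite /A (big_cat_nat _ (n := m') (m := 0) (p := M)) //= addrC addrK.
have L : K * \sum_(m' <= n < M) (n.+1%:R : R)^-1 <= \sum_(m' <= n < M) theta h / (c + n%:R).
  rewrite mulr_sumr; apply: ler_sum => n _.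
  rewrite /K -mulrA ler_wpM2l ?ltW ?theta_gt0 // -invfM.
  have cn : 0 < c + n%:R by have := ler0n R n; lra.
  have c1 : 0 < c + 1 by lra.
  rewrite ltf_pV2 ?posrE ?mulr_gt0 ?ltr0Sn //.
  rewrite -natr1 mulrDr mulr1 mulrDl mul1r; have := ler0n R n.
  have : 0 <= c * n%:R by rewrite mulr_ge0 ?ler0n // ltW.
  lra.
apply: lt_le_trans L; rewrite E.
have : K * (`|B| / K) = `|B| by rewrite mulrC -mulrA mulVf ?mulr1 // gt_eqF.
have := ler_norm B.
nra.
Qed.

Lemma dep_NS h m' M : dep M (fun a b => NS h m' M a).
Proof.
move=> a a' b b' E; rewrite /NS; apply: eq_in_all => n.
rewrite mem_iota add0n ltnS => /andP[_]; case: n => [//|n] nM.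
by have [-> _] := E n.+1 h nM.
Qed.

Lemma no_succ h m' : {ae P, forall w, exists n, (m' < n)%N /\ X n h w}.
Proof.
have mQ : forall M, measurable (Qset (fun a b => NS h m' M a)).
  by move=> M; case: (key0 _ _ (dep_NS h m' M)).
exists (\bigcap_M Qset (fun a b => NS h m' M a)); split.
- exact: bigcapT_measurable.
- apply/eqP; rewrite eq_le measure_ge0 andbT; apply/lee_addgt0Pr => e e0.
  rewrite add0e.
  have [M HM] := sum_q_unb h m' e^-1.
  have sub : (P (\bigcap_M Qset (fun a b => NS h m' M a)) <= P (Qset (fun a b => NS h m' M a)))%E.
    apply: le_measure; [rewrite inE; exact: bigcapT_measurable| rewrite inE; exact: mQ|].
    exact: bigcap_inf.
  apply: le_trans sub _.
  rewrite (key0 _ _ (dep_NS h m' M)).2 lee_fin.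
  have B := NS_bound h m' M.
  set S := \sum_(m' <= n < M) _ in HM B.
  set E := Ev _ _ _ _ _ in B *.
  have E0 : 0 <= E by apply: Ev_ge0 => a b; rewrite ler0n.
  have ee : e * e^-1 = 1 by rewrite mulfV // gt_eqF.
  have ie : 0 < e^-1 by rewrite invr_gt0.
  nra.
- move=> w /= /forallNP Hn M _; rewrite /Qset /NS.
  apply/allP => n _; apply/implyP => mn; apply/negP => Xn.
  by apply: (Hn n); split.
Qed.

Definition Dr h k0 (a b : nat -> H -> bool) (n : nat) : R :=
  \sum_(1 <= i < n.+1) (a i h)%:R * ((b i k0)%:R - pi k0).

Definition G h k0 (j m t : nat) (a b : nat -> H -> bool) : bool :=
  [exists n : 'I_t.+1, (Sn h a n == m) && (m%:R < j.+1%:R * `|Dr h k0 a b n|)].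

Lemma Sn_mono h a i n : (i <= n)%N -> (Sn h a i <= Sn h a n)%N.
Proof.
move=> inn; rewrite /Sn [X in (_ <= X)%N](big_cat_nat _ (n := i.+1) (m := 1) (p := n.+1)) //=.
  exact: leq_addr.
Qed.

Lemma Vr_Dr h k0 m a b n t : (n <= t)%N -> Sn h a n = m ->
  Vr h k0 m a b t = Dr h k0 a b n.
Proof.
move=> nt Sm; rewrite /Vr /Dr (big_cat_nat _ (n := n.+1) (m := 1) (p := t.+1)) //=.
rewrite [X in _ + X]big_nat_cond [X in _ + X]big1 ?addr0.
  apply: eq_big_nat => i /andP[i1]; rewrite ltnS => iN.
  by rewrite /al; case: (a i h) => //=; rewrite -Sm Sn_mono.
move=> i /andP[/andP[ni _] _]; rewrite /al.
case Ai: (a i h) => /=; last by rewrite mul0r.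
have : (Sn h a n + 1 <= Sn h a i)%N.
  case: i ni Ai => [//|i] ni Ai.
  by rewrite Sn_S Ai leq_add2r Sn_mono.
rewrite Sm addn1 => mi.
by rewrite leqNgt mi mul0r.
Qed.

Lemma G_bound h k0 j m t a b : (0 < m)%N ->
  (G h k0 j m t a b)%:R <= (j.+1%:R / m%:R)^+4 * Vr h k0 m a b t ^+ 4.
Proof.
move=> m0; have m0' : 0 < m%:R :> R by rewrite ltr0n.
case: (boolP (G h k0 j m t a b)) => /= [/existsP [n /andP[/eqP Sm HD]]|_].
  rewrite (@Vr_Dr h k0 m a b n t (leq_ord n) Sm) -exprMn.
  set u := j.+1%:R / m%:R * Dr h k0 a b n.
  have u1 : 1 < `|u|.
    rewrite /u normrM ger0_norm ?divr_ge0 ?ler0n // mulrAC ltr_pdivlMr // mul1r.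
    exact: HD.
  have : u ^+ 4 = (`|u| ^+ 2) ^+ 2 by rewrite real_normK ?num_real // -exprM.
  by move=> ->; apply: exprn_ege1; apply: exprn_ege1; exact: ltW.
by rewrite mulr_ge0 ?exprn_even_ge0 // exprn_ge0 // divr_ge0 ?ler0n.
Qed.

Lemma dep_G h k0 j m t : dep t (G h k0 j m t).
Proof.
move=> a a' b b' E; apply: eq_existsb => n.
have nt : (n <= t)%N by rewrite -ltnS.
have ES : Sn h a n = Sn h a' n.
  apply: eq_big_nat => i /andP[i1 iN].
  have iT : (1 <= i <= t)%N by rewrite i1 (leq_trans _ nt) // -ltnS.
  by have [-> _] := E i h iT.
have ED : Dr h k0 a b n = Dr h k0 a' b' n.
  apply: eq_big_nat => i /andP[i1 iN].
  have iT : (1 <= i <= t)%N by rewrite i1 (leq_trans _ nt) // -ltnS.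
  by have [-> _] := E i h iT; have [_ ->] := E i k0 iT.
by rewrite ES ED.
Qed.

Lemma PG h k0 j m t : (0 < m)%N ->
  (P (Qset (G h k0 j m t)) <= (8 * j.+1%:R ^+ 4 / m%:R ^+ 2)%:E)%E.
Proof.
move=> m0; have m0' : 0 < m%:R :> R by rewrite ltr0n.
rewrite (key0 _ _ (dep_G h k0 j m t)).2 lee_fin.
apply: le_trans (Ev_le _ _ _ _ _ _ (fun a b => @G_bound h k0 j m t a b m0)) _.
rewrite Ev_scale.
apply: le_trans (ler_wpM2l _ (V4_bound h k0 m t)) _.
  by rewrite exprn_ge0 // divr_ge0 ?ler0n.
rewrite le_eqVlt; apply/orP; left; apply/eqP; field.
by rewrite gt_eqF.
Qed.

Definition Fm h k0 j m : set T := \bigcup_t Qset (G h k0 j m t).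

Lemma Fm_meas h k0 j m : measurable (Fm h k0 j m).
Proof. by apply: bigcupT_measurable => t; case: (key0 _ _ (dep_G h k0 j m t)). Qed.

Lemma PF h k0 j m : (0 < m)%N -> (P (Fm h k0 j m) <= (8 * j.+1%:R ^+ 4 / m%:R ^+ 2)%:E)%E.
Proof.
move=> m0.
have mG : forall t, measurable (Qset (G h k0 j m t)) by move=> t; case: (key0 _ _ (dep_G h k0 j m t)).
have hom : {homo (fun t => Qset (G h k0 j m t)) : n m / (n <= m)%N >-> (n <= m)%O}.
  move=> t t' tt'; apply/subsetPset => w /existsP [n Hn]; apply/existsP.
  by exists (widen_ord (tt' : (t.+1 <= t'.+1)%N) n) => /=; exact: Hn.
have cv := @nondecreasing_cvg_mu _ _ _ P _ mG (Fm_meas h k0 j m) hom.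
rewrite /Fm -(cvg_lim _ cv); last exact: ereal_hausdorff.
apply: lime_le; first by apply/cvg_ex; eexists; exact: cv.
by apply: nearW => t; exact: PG.
Qed.



Lemma BC h k0 j : {ae P, forall w, exists n0, forall m, (n0 <= m)%N -> ~ Fm h k0 j m.+1 w}.
Proof.
set Fb := fun n => Fm h k0 j n.+1.
have mF : forall n, measurable (Fb n) by move=> n; exact: Fm_meas.
pose C : R := 16 * j.+1%:R ^+ 4.
have C0 : 0 <= C by rewrite mulr_ge0 // exprn_ge0.
have sumF : (\sum_(0 <= n <oo) P (Fb n) < +oo)%E.
  apply: (@le_lt_trans _ _ C%:E); last exact: ltry.
  apply: lime_le; first by apply: is_cvg_nneseries => n _ _; exact: measure_ge0.
  apply: nearW => N.
  apply: le_trans (_ : (\sum_(0 <= n < N) (C * ((n.+1%:R)^-1 - (n.+2%:R)^-1))%:E <= _)%E).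
    apply: lee_sum => n _; apply: le_trans (@PF h k0 j n.+1 (ltn0Sn n)) _; rewrite lee_fin.
    rewrite -[n.+2]addn1 natrD.
    set x := n.+1%:R.
    have x1 : 1 <= x by rewrite /x ler1n.
    rewrite -subr_ge0.
    have -> : C * (x^-1 - (x + 1%:R)^-1) - 8 * j.+1%:R ^+ 4 / x ^+ 2 =
              8 * j.+1%:R ^+ 4 * (x - 1) / (x ^+ 2 * (x + 1)).
      rewrite /C; field; apply/andP; split; rewrite gt_eqF //; lra.
    rewrite divr_ge0 // ?mulr_ge0 ?exprn_ge0 //; lra.
  rewrite sumEFin lee_fin -mulr_sumr.
  rewrite (telescope_sumr_eq (fun k => - (k.+1%:R)^-1)) //; last first.
    by move=> k _; rewrite opprK addrC.
  rewrite opprK /= invr1.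
  have : 0 <= (N.+1%:R : R)^-1 by rewrite invr_ge0.
  move=> h0; rewrite -[X in _ <= X]mulr1; apply: ler_wpM2l => //; lra.
exists (lim_sup_set Fb); split.
- rewrite /lim_sup_set; apply: bigcapT_measurable => n.
  by apply: bigcup_measurable => k _; exact: mF.
- exact: lim_sup_set_cvg0 mF sumF.
- move=> w /= Hw n _; apply: contrapT => Hc; apply: Hw.
  by exists n => m nm Fmw; apply: Hc; exists m.
Qed.


Lemma det_cvg (s : nat -> nat) (D q : nat -> R) (L : R) :
  {homo s : x y / (x <= y)%N} ->
  (forall B, exists t, (B <= s t)%N) ->
  (forall j : nat, exists n0, forall t, (n0 <= s t)%N -> j.+1%:R * `|D t| <= (s t)%:R) ->
  (forall t, 0 <= q t) ->
  (fun t => (s t)%:R / q t) @ \oo --> L ->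
  (fun t => D t / q t) @ \oo --> (0:R).
Proof.
move=> mono unb bnd q0 cv.
apply/cvgrPdist_le => e e0.
pose j := Num.Def.trunc ((`|L| + 1) / e).
have hj : (`|L| + 1) / e < j.+1%:R := truncnS_gt _.
have [n0 Hn0] := bnd j.
have [t0 Ht0] := unb n0.
have /cvgrPdist_le /(_ 1 ltr01) cv1 := cv.
near=> t.
have t0t : (t0 <= t)%N by near: t; exact: nbhs_infty_ge.
have H1 : `|L - (s t)%:R / q t| <= 1 by near: t; exact: cv1.
have st : (n0 <= s t)%N := leq_trans Ht0 (mono _ _ t0t).
have B := Hn0 t st.
rewrite sub0r normrN normrM [X in _ * X]ger0_norm ?invr_ge0 ?q0 //.
set z := `|D t| * (q t)^-1.
set y := (s t)%:R * (q t)^-1 in H1 *.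
have qi : 0 <= (q t)^-1 by rewrite invr_ge0.
have Jz : j.+1%:R * z <= y by rewrite /z /y mulrA ler_wpM2r.
have yL : y <= `|L| + 1.
  rewrite distrC in H1; have := ler_norm (y - L); have := ler_norm L; lra.
have hj' : `|L| + 1 < j.+1%:R * e by rewrite -ltr_pdivrMr.
have J0 : 0 < j.+1%:R :> R by rewrite ltr0Sn.
nra.
Unshelve. all: by end_near.
Qed.

Lemma sum_XY h k w t :
  \sum_(1 <= n < t.+1) (X n h w)%:R * (Y n k w)%:R =
  pi k * (Sn h (fun n h => X n h w) t)%:R + Dr h k (fun n h => X n h w) (fun n k => Y n k w) t.
Proof.
rewrite /Sn /Dr natr_sum mulr_sumr -big_split /=; apply: eq_bigr => n _; ring.
Qed.

Lemma sum_X h w t :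
  \sum_(1 <= n < t.+1) (X n h w)%:R = (Sn h (fun n h => X n h w) t)%:R :> R.
Proof. by rewrite /Sn natr_sum. Qed.

Lemma part1 h k (g : R) (Sinf : T -> R) :
  {ae P, forall w, ((\sum_(1 <= n < t.+1) (X n h w)%:R) / (t%:R `^ g))
       @[t --> \oo] --> Sinf w} ->
  {ae P, forall w, ((\sum_(1 <= n < t.+1) (X n h w)%:R * (Y n k w)%:R)
                       / (t%:R `^ g)) @[t --> \oo] --> pi k * Sinf w}.
Proof.
move=> hcv.
have A1 := ae_foralln (no_succ h).
have A2 := ae_foralln (BC h k).
apply: filterS3 A1 A2 hcv => w H1 H2 H3.
set a := fun n h => X n h w; set b := fun n k => Y n k w.
set s := Sn h a.
have E : (fun t => (\sum_(1 <= n < t.+1) (X n h w)%:R * (Y n k w)%:R) / (t%:R `^ g)) =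
   (fun t => pi k * ((s t)%:R / (t%:R `^ g)) + Dr h k a b t / (t%:R `^ g)).
  by apply: funext => t; rewrite sum_XY mulrDl mulrA.
rewrite E -[X in _ --> X]addr0.
have H3' : (fun t => (s t)%:R / (t%:R `^ g)) @ \oo --> Sinf w.
  by under eq_fun do rewrite -sum_X.
apply: cvgD; first exact: cvgMr.
apply: (@det_cvg s _ _ _) H3'.
- by move=> x y; exact: Sn_mono.
- elim=> [|B [t Bt]]; first by exists 0%N.
  have [n [tn Xn]] := H1 t.
  exists n; case: n tn Xn => [//|n] tn Xn.
  rewrite /s Sn_S /a Xn addn1 ltnS (leq_trans Bt) // Sn_mono //.
- move=> j; have [n0 Hn0] := H2 j; exists n0.+1 => t st.
  have st1 : (0 < s t)%N := leq_trans (ltn0Sn _) st.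
  have Hm : (n0 <= (s t).-1)%N by rewrite -ltnS prednK.
  have NF := Hn0 _ Hm; rewrite prednK // in NF.
  rewrite leNgt; apply/negP => lt; apply: NF; exists t => //.
  by apply/existsP; exists ord_max; rewrite /= eqxx /=.
- by move=> t; exact: powR_ge0.
Qed.


Lemma part2 h k j (g : R) (Sinf : T -> R) :
  {ae P, forall w, ((\sum_(1 <= n < t.+1) (X n h w)%:R) / (t%:R `^ g))
       @[t --> \oo] --> Sinf w} ->
  {ae P, forall w, 0 < Sinf w} ->
  {ae P, forall w,
     ((\sum_(1 <= n < t.+1) (X n h w)%:R * (Y n k w)%:R)
                   / (\sum_(1 <= n < t.+1) (X n h w)%:R * (Y n j w)%:R))
       @[t --> \oo] --> pi k / pi j}.
Proof.
move=> hcv hpos.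
have Ak := @part1 h k g Sinf hcv; have Aj := @part1 h j g Sinf hcv.
apply: filterS3 Ak Aj hpos => w Hk Hj Sp.
have pj0 : 0 < pi j by have /andP[] := pi01 j.
have Ej : pi j * Sinf w != 0 by rewrite mulf_neq0 // gt_eqF.
have HP := @cvgM R nat \oo _ _ _ _ _ Hk (@cvgV R nat \oo _ _ _ Ej Hj).
have -> : pi k / pi j = pi k * Sinf w * (pi j * Sinf w)^-1.
  by field; rewrite !gt_eqF.
move: HP => /(_ eventually_filter eventually_filter) HP.
move: HP; apply: cvg_trans; apply: near_eq_cvg; near=> t.
have t1 : (1 <= t)%N by near: t; exact: nbhs_infty_ge.
have q0 : t%:R `^ g != 0 by rewrite gt_eqF // powR_gt0 // ltr0n.
rewrite /= invfM invrK mulrA mulrAC -(mulrA _ _^-1) mulVf // mulr1.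
by [].
Unshelve. all: by end_near.
Qed.

Lemma main_sec (g : R) (Sinf : H -> T -> R) :
  (forall h, {ae P, forall w,
     ((\sum_(1 <= n < t.+1) (X n h w)%:R) / (t%:R `^ g))
       @[t --> \oo] --> Sinf h w}) ->
  (forall h, {ae P, forall w, 0 < Sinf h w}) ->
  (forall h k, {ae P, forall w,
     ((\sum_(1 <= n < t.+1) (X n h w)%:R * (Y n k w)%:R)
                       / (t%:R `^ g))
       @[t --> \oo] --> pi k * Sinf h w})
  /\
  (forall k j h, {ae P, forall w,
     ((\sum_(1 <= n < t.+1) (X n h w)%:R * (Y n k w)%:R)
                   / (\sum_(1 <= n < t.+1) (X n h w)%:R * (Y n j w)%:R))
       @[t --> \oo] --> pi k / pi j}).
Proof.
move=> hcv hpos; split.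
  by move=> h k; exact: (@part1 h k g (Sinf h) (hcv h)).
by move=> k j h; exact: (@part2 h k j g (Sinf h) (hcv h) (hpos h)).
Qed.


End Main.

Theorem theorem3 (d : measure_display) (T : measurableType d) (R : realType)
  (P : probability T R) (H : finType)
  (theta : H -> R) (c : R) (gamma : H -> H -> R) (pi : H -> R)
  (X Y : nat -> H -> T -> bool) (gstar : R) (Sinf : H -> T -> R) :
  (* parameters *)
  (forall h, 0 < theta h) ->
  (forall h, theta h <= c) ->
  (* (A1) *)
  (forall j h, 0 <= gamma j h) ->
  (forall h, \sum_(j : H) gamma j h <= 1) ->
  (* (A2) *)
  irreducible gamma ->
  (* measurability of the 0/1 random variables *)
  (forall n h, (0 < n)%N -> measurable [set w | X n h w]) ->
  (forall n k, (0 < n)%N -> measurable [set w | Y n k w]) ->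
  (* the interacting Bernoulli dynamics, conditionally on the past
     sigma(X_m, Y_m : m <= t) *)
  (forall (t : nat) (xw yw : nat -> H -> bool) (x : H -> bool),
     P (past_event X Y t xw yw `&` Xvec_event X t.+1 x)
     = (P (past_event X Y t xw yw) *
        (\prod_(h : H) (if x h then pmodel theta c gamma xw t h
                        else 1 - pmodel theta c gamma xw t h))%:E)%E) ->
  (* exactly one component of Y_n equals 1 *)
  (forall n, (0 < n)%N -> forall w, exists! k, Y n k w) ->
  (* (A3) *)
  (forall k, 0 < pi k < 1) ->
  \sum_(k : H) pi k = 1 ->
  (forall (n : nat) (xw yw : nat -> H -> bool) (x : H -> bool) (k : H),
     (0 < n)%N ->
     P (past_event X Y n.-1 xw yw `&` Xvec_event X n x `&` [set w | Y n k w])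
     = (P (past_event X Y n.-1 xw yw `&` Xvec_event X n x) * (pi k)%:E)%E) ->
  (* gamma^* is the Perron-Frobenius eigenvalue of Gamma *)
  PF_eigenvalue gamma gstar ->
  (* S_{infty,h}: the a.s. limit of S_{t,h} / t^{gamma^*}, finite and > 0 *)
  (forall h, {ae P, forall w,
     ((\sum_(1 <= n < t.+1) (X n h w)%:R) / (t%:R `^ gstar))
       @[t --> \oo] --> Sinf h w}) ->
  (forall h, {ae P, forall w, 0 < Sinf h w}) ->
  (forall h k, {ae P, forall w,
     ((\sum_(1 <= n < t.+1) (X n h w)%:R * (Y n k w)%:R)
                       / (t%:R `^ gstar))
       @[t --> \oo] --> pi k * Sinf h w})
  /\
  (forall k j h, {ae P, forall w,
     ((\sum_(1 <= n < t.+1) (X n h w)%:R * (Y n k w)%:R)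
                   / (\sum_(1 <= n < t.+1) (X n h w)%:R * (Y n j w)%:R))
       @[t --> \oo] --> pi k / pi j}).
Proof.
move=> htheta hthc hg hgs _ hX hY hdyn hone hpi hpis hA3 _ hcv hpos.
exact: (@main_sec d T R P H theta c gamma pi X Y htheta hthc hg hgs hX hY hdyn hone hpi hpis hA3 gstar Sinf hcv hpos).
Qed.
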